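(* Let $H$ be a finite-dimensional complex Hilbert space and let $\mathcal{SA}(H)=\{A\colon H\to H \text{ linear} \mid A^{\dagger}=A\}$ be the set of self-adjoint operators on $H$. Then $\mathcal{SA}(H)$ is a real vector space, and the map $$\mathrm{hs}_{\mathcal{SA}}\colon \mathcal{SA}(H)\longrightarrow \mathcal{SA}(H)^{*}=\big(\mathcal{SA}(H)\multimap\mathbb{R}\big),\qquad \mathrm{hs}_{\mathcal{SA}}(A)(B)=\mathrm{tr}(AB),$$ is a well-defined isomorphism of real vector spaces, natural in $H$ in the sense that for every linear map $C\colon H\to K$ between finite-dimensional Hilbert spaces, $\mathcal{SA}(C)^{*}\circ\mathrm{hs}_{\mathcal{SA},K}=\mathrm{hs}_{\mathcal{SA},H}\circ\mathcal{SA}(C^\dagger)$, where $\mathcal{SA}(C)^*(f)=f\circ\mathcal{SA}(C)$. Moreover, the functors $\mathcal{SA}\colon\mathbf{FdHilb}\to\mathbf{Vect}_{\mathbb{R}}$ and $\mathcal{SA}\colon\mathbf{FdHilb}^{\mathrm{op}}\to\mathbf{Vect}_{\mathbb{R}}^{\mathrm{op}}$ together with these isomorphisms form a map of adjunctions (in the sense of Mac Lane, IV.7, with functor squares commuting up to the isomorphisms $\mathrm{hs}_{\mathcal{SA}}$) from the adjunction $(-)^{\dagger}\dashv(-)^{\dagger}$ between $\mathbf{FdHilb}$ and $\mathbf{FdHilb}^{\mathrm{op}}$ to the adjunction $((-)\multimap\mathbb{R})\dashv((-)\multimap\mathbb{R})$ between $\mathbf{Vect}_{\mathbb{R}}$ and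 $\mathbf{Vect}_{\mathbb{R}}^{\mathrm{op}}$.
   Context: $\mathbf{FdHilb}$ is the category of finite-dimensional complex Hilbert spaces with linear maps; $C^{\dagger}$ is the adjoint of $C$; $(-)^\dagger\colon\mathbf{FdHilb}\to\mathbf{FdHilb}^{\mathrm{op}}$ is identity on objects and $C\mapsto C^\dagger$ on maps, and is self-adjoint. $\mathbf{Vect}_{\mathbb{R}}$ is the category of real vector spaces and linear maps; $V\multimap\mathbb{R}$ is the space of linear maps $V\to\mathbb{R}$, and the functor $(-)\multimap\mathbb{R}\colon\mathbf{Vect}_{\mathbb{R}}\to\mathbf{Vect}_{\mathbb{R}}^{\mathrm{op}}$ (acting on maps by precomposition) is adjoint to itself via swapping arguments (linear maps $V\to(W\multimap\mathbb{R})$ correspond to $W\to(V\multimap\mathbb{R})$). The functor $\mathcal{SA}$ sends $H$ to $\mathcal{SA}(H)$ and $C\colon H\to K$ to $\mathcal{SA}(C)(A)=CAC^{\dagger}$. $\mathrm{tr}$ is the trace. *)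

(* Defs.v *)
From HB Require Import structures.
From mathcomp Require Import all_boot all_order all_algebra.
From mathcomp Require Import reals.
From mathcomp Require Import complex.
Set Implicit Arguments. Unset Strict Implicit. Unset Printing Implicit Defensive.
Import Order.TTheory GRing.Theory Num.Theory.
Local Open Scope ring_scope.
Local Open Scope complex_scope.

(* A finite-dimensional complex Hilbert space of dimension n is modelled as
   C^n = 'cV[R[i]]_n with the standard inner product <x,y> = x^* y, where
   R : realType is the real numbers and R[i] the complex numbers.
   A linear map H -> K (dim H = n, dim K = k) is a matrix 'M_(k, n)
   acting on column vectors. *)

Definition dag (R : realType) (k n : nat) (C : 'M[R[i]]_(k, n)) : 'M[R[i]]_(n, k) :=
  (map_mx (@conjc R) C)^T.

Definition selfadj (R : realType) (n : nat) (A : 'M[R[i]]_n) : Prop :=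
  dag A = A.

Definition SAmap (R : realType) (k n : nat) (C : 'M[R[i]]_(k, n))
  (A : 'M[R[i]]_n) : 'M[R[i]]_k := C *m A *m dag C.

(* hs(A)(B) = tr(AB), as a real number (its real part; the theorem states
   that tr(AB) is real for self-adjoint A, B) *)
Definition hs (R : realType) (n : nat) (A B : 'M[R[i]]_n) : R :=
  complex.Re (\tr (A *m B)).

(* f : matrices -> R is an element of SA(H) -o R, i.e. its restriction to
   SA(H) is R-linear (only its values on SA(H) matter) *)
Definition real_linear_on_SA (R : realType) (n : nat) (f : 'M[R[i]]_n -> R) : Prop :=
  forall (r : R) (A B : 'M[R[i]]_n), selfadj A -> selfadj B ->
    f ((r%:C) *: A + B) = r * f A + f B.

(* Main.v *)
Require Import Defs.
From HB Require Import structures.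
From mathcomp Require Import all_boot all_order all_algebra.
From mathcomp Require Import reals.
From mathcomp Require Import complex.
From mathcomp Require Import ring lra.
Import Order.TTheory GRing.Theory Num.Theory.
Local Open Scope ring_scope.
Local Open Scope complex_scope.

Section H.
Variable R : realType.
Implicit Types z w : R[i].

Lemma ReD z w : complex.Re (z + w) = complex.Re z + complex.Re w. Proof. by case: z => a b; case: w => c d; simpc. Qed.
Lemma ImD z w : complex.Im (z + w) = complex.Im z + complex.Im w. Proof. by case: z => a b; case: w => c d; simpc. Qed.
Lemma ReZ (r : R) z : complex.Re (r%:C * z) = r * complex.Re z.
Proof. by case: z => a b /=; rewrite mul0r subr0. Qed.
Lemma ImZ (r : R) z : complex.Im (r%:C * z) = r * complex.Im z.
Proof. by case: z => a b /=; rewrite mul0r addr0. Qed.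
Lemma Re_sum (I : Type) (s : seq I) (F : I -> R[i]) :
  complex.Re (\sum_(i <- s) F i) = \sum_(i <- s) complex.Re (F i).
Proof. by elim/big_rec2: _ => // i y1 y2 _ <-; rewrite ReD. Qed.
Lemma real_conj z : conjc z = z -> z = (complex.Re z)%:C.
Proof.
case: z => a b [] H; have -> : b = 0 by lra.
by [].
Qed.

Lemma dagD {k n} (A B : 'M[R[i]]_(k, n)) : dag (A + B) = dag A + dag B.
Proof. by rewrite /dag map_mxD linearD. Qed.
Lemma dagZr {k n} (r : R) (A : 'M[R[i]]_(k, n)) : dag (r%:C *: A) = r%:C *: dag A.
Proof. by rewrite /dag map_mxZ linearZ /=; congr (_ *: _); rewrite /= oppr0. Qed.
Lemma dagM {m k n} (A : 'M[R[i]]_(m, k)) (B : 'M[R[i]]_(k, n)) :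
  dag (A *m B) = dag B *m dag A.
Proof. by rewrite /dag map_mxM trmx_mul. Qed.
Lemma dagK {k n} (A : 'M[R[i]]_(k, n)) : dag (dag A) = A.
Proof.
by apply/matrixP => i j; rewrite /dag !mxE conjcK.
Qed.
Lemma dag1 {n} : dag (1%:M : 'M[R[i]]_n) = 1%:M.
Proof. by rewrite /dag map_mx1 trmx1. Qed.
Lemma dag0 {k n} : dag (0 : 'M[R[i]]_(k, n)) = 0.
Proof. by rewrite /dag map_mx0 trmx0. Qed.
Lemma tr_dag {n} (A : 'M[R[i]]_n) : \tr (dag A) = conjc (\tr A).
Proof. by rewrite /dag mxtrace_tr /mxtrace rmorph_sum; apply: eq_bigr => i _; rewrite mxE. Qed.

Lemma dagZ {k n} (c : R[i]) (A : 'M[R[i]]_(k, n)) : dag (c *: A) = conjc c *: dag A.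
Proof. by rewrite /dag map_mxZ linearZ. Qed.
Lemma dag_delta {n} (i j : 'I_n) : dag (delta_mx i j : 'M[R[i]]_n) = delta_mx j i.
Proof. by rewrite /dag map_delta_mx trmx_delta. Qed.
Lemma dagN {k n} (A : 'M[R[i]]_(k, n)) : dag (- A) = - dag A.
Proof. by rewrite /dag map_mxN linearN. Qed.

Definition Sm {n} (i j : 'I_n) : 'M[R[i]]_n := delta_mx i j + delta_mx j i.
Definition Tm {n} (i j : 'I_n) : 'M[R[i]]_n := Complex 0 1 *: (delta_mx i j - delta_mx j i).

Lemma Sm_sa {n} (i j : 'I_n) : selfadj (Sm i j).
Proof. by rewrite /selfadj /Sm dagD !dag_delta addrC. Qed.
Lemma Tm_sa {n} (i j : 'I_n) : selfadj (Tm i j).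
Proof.
rewrite /selfadj /Tm dagZ dagD dagN !dag_delta.
have -> : conjc (Complex (0:R) 1) = - Complex 0 1 by simpc.
by rewrite scaleNr -scalerN opprB.
Qed.
Lemma SmC {n} (i j : 'I_n) : Sm j i = Sm i j.
Proof. by rewrite /Sm addrC. Qed.
Lemma TmC {n} (i j : 'I_n) : Tm j i = (-1)%:C *: Tm i j + 0.
Proof.
rewrite addr0 /Tm scalerA.
have -> : (-1)%:C * Complex 0 1 = - Complex 0 1 :> R[i] by simpc.
by rewrite scaleNr -scalerN opprB.
Qed.

Lemma tr_delta {n} (A : 'M[R[i]]_n) (i j : 'I_n) : \tr (A *m delta_mx i j) = A j i.
Proof.
rewrite /mxtrace (bigD1 j) //= big1 ?addr0 => [|k /negbTE kj]; rewrite mxE.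
  rewrite (bigD1 i) //= big1 ?addr0 => [|l /negbTE li].
    by rewrite mxE !eqxx mulr1.
  by rewrite mxE li mulr0.
by rewrite big1 // => l _; rewrite mxE kj andbF mulr0.
Qed.

Lemma hsS {n} (D : 'M[R[i]]_n) i j :
  hs D (Sm i j) = complex.Re (D j i) + complex.Re (D i j).
Proof. by rewrite /hs /Sm mulmxDr mxtraceD !tr_delta ReD. Qed.

Lemma hsT {n} (D : 'M[R[i]]_n) i j :
  hs D (Tm i j) = complex.Im (D i j) - complex.Im (D j i).
Proof.
rewrite /hs /Tm -scalemxAr mxtraceZ mulmxBr linearB /= !tr_delta.
by case: (D i j) => a b; case: (D j i) => c d; simpc.
Qed.

Lemma sa_comb {n} (r : R) (A B : 'M[R[i]]_n) : selfadj A -> selfadj B ->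
  selfadj (r%:C *: A + B).
Proof. by rewrite /selfadj dagD dagZr => -> ->. Qed.
Lemma saD {n} {A B : 'M[R[i]]_n} : selfadj A -> selfadj B -> selfadj (A + B).
Proof. by rewrite /selfadj dagD => -> ->. Qed.
Lemma saZ {n} (r : R) {A : 'M[R[i]]_n} : selfadj A -> selfadj (r%:C *: A).
Proof. by rewrite /selfadj dagZr => ->. Qed.
Lemma sa0 {n} : selfadj (0 : 'M[R[i]]_n).
Proof. exact: dag0. Qed.
Lemma one_C : (1%:C : R[i]) = 1. Proof. by []. Qed.

Lemma rl_props {n} {g : 'M[R[i]]_n -> R} : real_linear_on_SA g ->
  [/\ g 0 = 0, (forall X Y, selfadj X -> selfadj Y -> g (X + Y) = g X + g Y)
   & (forall r X, selfadj X -> g (r%:C *: X) = r * g X)].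
Proof.
move=> gl.
have g0 : g 0 = 0.
  have := gl 1 0 0 sa0 sa0; rewrite one_C scale1r addr0 mul1r => H.
  lra.
split => //.
  by move=> X Y sX sY; have := gl 1 X Y sX sY; rewrite one_C scale1r mul1r.
by move=> r X sX; have := gl r X 0 sX sa0; rewrite !addr0 g0 addr0.
Qed.

Lemma g_sum {n} (g : 'M[R[i]]_n -> R) (c d : 'I_n -> 'I_n -> R) :
  real_linear_on_SA g ->
  g (\sum_i \sum_j ((c i j)%:C *: Sm i j + (d i j)%:C *: Tm i j)) =
  \sum_i \sum_j (c i j * g (Sm i j) + d i j * g (Tm i j)).
Proof.
move=> gl; have [g0 gD gZ] := rl_props gl.
have step : forall (X : 'M[R[i]]_n) y, selfadj X /\ g X = y ->
    forall i j, selfadj ((c i j)%:C *: Sm i j + (d i j)%:C *: Tm i j + X) /\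
     g ((c i j)%:C *: Sm i j + (d i j)%:C *: Tm i j + X) =
     c i j * g (Sm i j) + d i j * g (Tm i j) + y.
  move=> X y [sX <-] i j.
  have sS := saZ (c i j) (Sm_sa i j); have sT := saZ (d i j) (Tm_sa i j).
  have s1 := saD sS sT.
  split; first exact: saD.
  by rewrite gD // gD // (gZ _ _ (Sm_sa i j)) (gZ _ _ (Tm_sa i j)).
suff [] : selfadj (\sum_i \sum_j ((c i j)%:C *: Sm i j + (d i j)%:C *: Tm i j)) /\
  g (\sum_i \sum_j ((c i j)%:C *: Sm i j + (d i j)%:C *: Tm i j)) =
  \sum_i \sum_j (c i j * g (Sm i j) + d i j * g (Tm i j)) by [].
elim/big_rec2: _ => [|i y1 y2 _ [s1 e1]]; first by split; [exact: sa0|].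
have [s2 e2] : selfadj (\sum_j ((c i j)%:C *: Sm i j + (d i j)%:C *: Tm i j)) /\
  g (\sum_j ((c i j)%:C *: Sm i j + (d i j)%:C *: Tm i j)) =
  \sum_j (c i j * g (Sm i j) + d i j * g (Tm i j)).
  elim/big_rec2: _ => [|j z1 z2 _ H]; first by split; [exact: sa0|].
  exact: step.
by split; [exact: saD | rewrite gD // e1 e2].
Qed.

Lemma delta_sum0 {n} (G : 'I_n -> R[i]) (l : 'I_n) :
  \sum_j G j * (l == j)%:R = G l.
Proof.
rewrite (bigD1 l) //= eqxx mulr1 big1 ?addr0 // => j /negbTE lj.
by rewrite eq_sym lj mulr0.
Qed.

Lemma delta_sum1 {n} (F : 'I_n -> 'I_n -> R[i]) (k l : 'I_n) :
  \sum_i \sum_j F i j * ((k == i) && (l == j))%:R = F k l.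
Proof.
transitivity (\sum_i (\sum_j F i j * (l == j)%:R) * (k == i)%:R).
  apply: eq_bigr => i _; rewrite big_distrl; apply: eq_bigr => j _ /=.
  by case: (k == i); case: (l == j); rewrite /= ?mulr0 ?mul0r ?mulr1.
by under eq_bigr do rewrite delta_sum0; rewrite delta_sum0.
Qed.

Lemma delta_sum2 {n} (F : 'I_n -> 'I_n -> R[i]) (k l : 'I_n) :
  \sum_i \sum_j F i j * ((k == j) && (l == i))%:R = F l k.
Proof. by rewrite exchange_big /= (delta_sum1 (fun j i => F i j)). Qed.

Lemma cplx_decomp z :
  (complex.Re z)%:C + (complex.Im z)%:C * Complex 0 1 = z.
Proof. by case: z => a b; simpc. Qed.
Lemma cplx_decompJ z :
  (complex.Re z)%:C - (complex.Im z)%:C * Complex 0 1 = conjc z.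
Proof. by case: z => a b; simpc. Qed.

Lemma decomp {n} (B : 'M[R[i]]_n) : selfadj B ->
  (2%:R)%:C *: B = \sum_i \sum_j ((complex.Re (B i j))%:C *: Sm i j +
     (complex.Im (B i j))%:C *: Tm i j).
Proof.
move=> sB; apply/matrixP => k l.
rewrite !mxE summxE.
transitivity (\sum_i \sum_j
  (((complex.Re (B i j))%:C + (complex.Im (B i j))%:C * Complex 0 1) *
      ((k == i) && (l == j))%:R +
   ((complex.Re (B i j))%:C - (complex.Im (B i j))%:C * Complex 0 1) *
      ((k == j) && (l == i))%:R)); last first.
  apply: eq_bigr => i _; rewrite summxE; apply: eq_bigr => j _.
  rewrite !mxE; ring.
under eq_bigr do rewrite big_split /=.
rewrite big_split /=.
rewrite (delta_sum1 (fun i j => (complex.Re (B i j))%:C + (complex.Im (B i j))%:C * Complex 0 1)).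
rewrite (delta_sum2 (fun i j => (complex.Re (B i j))%:C - (complex.Im (B i j))%:C * Complex 0 1)).
rewrite cplx_decomp cplx_decompJ.
have -> : conjc (B l k) = B k l by rewrite -{2}sB /dag !mxE.
by case: (B k l) => a b; simpc; congr Complex; ring.
Qed.

Lemma hs_lin2 {n} (A : 'M[R[i]]_n) : real_linear_on_SA (hs A).
Proof.
move=> r B B' _ _; rewrite /hs mulmxDr -scalemxAr mxtraceD mxtraceZ ReD ReZ.
by [].
Qed.
Lemma hs_lin1 {n} (r : R) (A A' B : 'M[R[i]]_n) :
  hs (r%:C *: A + A') B = r * hs A B + hs A' B.
Proof. by rewrite /hs mulmxDl -scalemxAl mxtraceD mxtraceZ ReD ReZ. Qed.

Lemma sa_entry {n} (D : 'M[R[i]]_n) i j : selfadj D -> D j i = conjc (D i j).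
Proof. by move=> sD; rewrite -{1}sD /dag !mxE. Qed.

Lemma hsS_sa {n} (D : 'M[R[i]]_n) i j : selfadj D ->
  hs D (Sm i j) = 2%:R * complex.Re (D i j).
Proof.
move=> sD; rewrite hsS (sa_entry D i j sD).
by case: (D i j) => a b /=; rewrite mulr2n mulrDl mul1r.
Qed.
Lemma hsT_sa {n} (D : 'M[R[i]]_n) i j : selfadj D ->
  hs D (Tm i j) = 2%:R * complex.Im (D i j).
Proof.
move=> sD; rewrite hsT (sa_entry D i j sD).
by case: (D i j) => a b /=; rewrite opprK mulr2n mulrDl mul1r.
Qed.

Lemma hs_inj {n} (A A' : 'M[R[i]]_n) : selfadj A -> selfadj A' ->
  (forall B : 'M[R[i]]_n, selfadj B -> hs A B = hs A' B) -> A = A'.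
Proof.
move=> sA sA' H.
set D := (-1)%:C *: A' + A.
have sD : selfadj D by apply: sa_comb.
have hD : forall B, selfadj B -> hs D B = 0.
  by move=> B sB; rewrite hs_lin1 H //; lra.
have D0 : D = 0.
  apply/matrixP => i j; rewrite [RHS]mxE.
  have h1 := hD _ (Sm_sa i j); have h2 := hD _ (Tm_sa i j).
  rewrite hsS_sa // in h1; rewrite hsT_sa // in h2.
  move: h1 h2; case: (D i j) => a b /= h1 h2.
  have -> : a = 0 by lra.
  by have -> : b = 0 by lra.
have : A = D - (-1)%:C *: A' by rewrite /D addrC addKr.
rewrite D0 sub0r => ->.
have -> : (-1)%:C = -1 :> R[i] by simpc.
by rewrite scaleN1r opprK.
Qed.

Lemma hs_surj {n} (f : 'M[R[i]]_n -> R) : real_linear_on_SA f ->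
  exists2 A : 'M[R[i]]_n, selfadj A &
    forall B : 'M[R[i]]_n, selfadj B -> hs A B = f B.
Proof.
move=> fl; have [f0 fD fZ] := rl_props fl.
pose A : 'M[R[i]]_n := \matrix_(i, j)
  ((f (Sm i j) / 2%:R)%:C + (f (Tm i j) / 2%:R)%:C * Complex 0 1).
have fT : forall i j, f (Tm j i) = - f (Tm i j).
  by move=> i j; have := fl (-1) (Tm i j) 0 (Tm_sa i j) sa0; rewrite -TmC f0 addr0 mulN1r.
have ReA : forall i j, complex.Re (A i j) = f (Sm i j) / 2%:R.
  by move=> i j; rewrite mxE; simpc.
have ImA : forall i j, complex.Im (A i j) = f (Tm i j) / 2%:R.
  by move=> i j; rewrite mxE; simpc.
have sA : selfadj A.
  apply/matrixP => i j; rewrite /dag !mxE SmC fT.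
  simpc; congr Complex; lra.
exists A => // B sB.
have hl := hs_lin2 A; have [h0 hD hZ] := rl_props hl.
have e1 := congr1 (hs A) (decomp B sB).
have e2 := congr1 f (decomp B sB).
rewrite g_sum // hZ // in e1; rewrite g_sum // fZ // in e2.
have : 2%:R * hs A B = 2%:R * f B.
  rewrite e1 e2; apply: eq_bigr => i _; apply: eq_bigr => j _.
  rewrite hsS_sa // hsT_sa // ReA ImA; congr (_ * _ + _ * _); lra.
move=> H; lra.
Qed.
End H.

Theorem proposition2p2 (R : realType) :
  (* (1) SA(H) is a real vector space: a real-linear subspace of the operators *)
  (forall n : nat,
     selfadj (0 : 'M[R[i]]_n) /\
     (forall (r : R) (A B : 'M[R[i]]_n),
        selfadj A -> selfadj B -> selfadj ((r%:C) *: A + B))) /\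
  (* (2) hs is well defined: tr(AB) is real, and hs(A) is R-linear on SA(H) *)
  (forall (n : nat) (A B : 'M[R[i]]_n),
     selfadj A -> selfadj B -> \tr (A *m B) = (hs A B)%:C) /\
  (forall (n : nat) (A : 'M[R[i]]_n), selfadj A -> real_linear_on_SA (hs A)) /\
  (* (3) hs is an isomorphism of real vector spaces SA(H) -> SA(H) -o R:
         it is R-linear, injective and surjective *)
  (forall (n : nat) (r : R) (A A' B : 'M[R[i]]_n),
     selfadj A -> selfadj A' -> selfadj B ->
     hs ((r%:C) *: A + A') B = r * hs A B + hs A' B) /\
  (forall (n : nat) (A A' : 'M[R[i]]_n), selfadj A -> selfadj A' ->
     (forall B : 'M[R[i]]_n, selfadj B -> hs A B = hs A' B) -> A = A') /\
  (forall (n : nat) (f : 'M[R[i]]_n -> R), real_linear_on_SA f ->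
     exists2 A : 'M[R[i]]_n, selfadj A &
       forall B : 'M[R[i]]_n, selfadj B -> hs A B = f B) /\
  (* (4) SA is a functor FdHilb -> Vect_R: SA(C) maps SA(H) R-linearly into
         SA(K), preserves identities and composition *)
  (forall (k n : nat) (C : 'M[R[i]]_(k, n)) (A : 'M[R[i]]_n),
     selfadj A -> selfadj (SAmap C A)) /\
  (forall (k n : nat) (C : 'M[R[i]]_(k, n)) (r : R) (A B : 'M[R[i]]_n),
     selfadj A -> selfadj B ->
     SAmap C ((r%:C) *: A + B) = (r%:C) *: SAmap C A + SAmap C B) /\
  (forall (n : nat) (A : 'M[R[i]]_n), selfadj A -> SAmap 1%:M A = A) /\
  (forall (m k n : nat) (D : 'M[R[i]]_(m, k)) (C : 'M[R[i]]_(k, n))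
          (A : 'M[R[i]]_n),
     selfadj A -> SAmap (D *m C) A = SAmap D (SAmap C A)) /\
  (* (5) naturality: SA(C)^* o hs_K = hs_H o SA(C^dagger), for C : H -> K,
         evaluated at A in SA(K) and B in SA(H) *)
  (forall (k n : nat) (C : 'M[R[i]]_(k, n)) (A : 'M[R[i]]_k) (B : 'M[R[i]]_n),
     selfadj A -> selfadj B ->
     hs A (SAmap C B) = hs (SAmap (dag C) A) B) /\
  (* (6) map of adjunctions (Mac Lane IV.7): the hom-set bijections commute.
         For C : K -> H (a morphism H^dagger -> K in FdHilb^op) with transpose
         C^dagger : H -> K, the transpose (argument swap) of
         hs_H o SA(C) : SA(K) -> SA(H) -o R equals hs_K o SA(C^dagger) :
         SA(H) -> SA(K) -o R; evaluated at B in SA(H), A in SA(K). *)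
  (forall (k n : nat) (C : 'M[R[i]]_(n, k)) (A : 'M[R[i]]_k) (B : 'M[R[i]]_n),
     selfadj A -> selfadj B ->
     (fun B0 A0 => hs (SAmap C A0) B0) B A = hs (SAmap (dag C) B) A).
Proof.
split.
  move=> n; split; first exact: sa0.
  by move=> r A B; apply: sa_comb.
split.
  move=> n A B sA sB; apply: real_conj.
  by rewrite -tr_dag dagM sA sB mxtrace_mulC.
split; first by move=> n A _; exact: hs_lin2.
split; first by move=> n r A A' B _ _ _; exact: hs_lin1.
split; first by move=> n A A'; exact: hs_inj.
split; first by move=> n f; exact: hs_surj.
split.
  move=> k n C A sA; rewrite /selfadj /SAmap !dagM dagK sA.
  by rewrite mulmxA.
split.
  move=> k n C r A B _ _; rewrite /SAmap mulmxDr mulmxDl.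
  by rewrite -!scalemxAr -scalemxAl.
split; first by move=> n A _; rewrite /SAmap dag1 mul1mx mulmx1.
split.
  by move=> m k n D C A _; rewrite /SAmap dagM !mulmxA.
split.
  move=> k n C A B _ _; rewrite /hs /SAmap dagK; congr complex.Re.
  by rewrite !mulmxA [LHS]mxtrace_mulC !mulmxA.
move=> k n C A B _ _; rewrite /hs /SAmap dagK /=; congr complex.Re.
rewrite [LHS]mxtrace_mulC !mulmxA [LHS]mxtrace_mulC !mulmxA.
by [].
Qed.
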